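(* Let $K$ be a field with an absolute value $v$, and let $\mathbb{C}_v$ denote the completion of an algebraic closure of $K$. Let $\phi(z)\in K[z]$ be a polynomial of degree $d\geq 2$ with associated local canonical height $\hat{\lambda}_{v,\phi}$. Let $\gamma\in\mathbb{C}_v^{\times}$ and define $\psi(z)=\gamma\,\phi(\gamma^{-1}z)\in\mathbb{C}_v[z]$. Write $\psi(z)=b_d z^d+\cdots+b_0=b_d(z-\beta_1)\cdots(z-\beta_d)$ with $b_d\neq 0$, $\beta_i\in\mathbb{C}_v$, let $A=\max_i|\beta_i|_v$, $B=|b_d|_v^{-1/d}$, and let $c_v=\max\{1,A,B\}$, $C_v=\max\{1,|b_0|_v,\ldots,|b_d|_v\}$ if $v$ is non-archimedean, and $c_v=\max\{1,A+B\}$, $C_v=\max\{1,|b_0|_v+\cdots+|b_d|_v\}$ if $v$ is archimedean. Then for all $x\in\mathbb{C}_v$, $$\frac{-d\log c_v}{d-1}\leq \hat{\lambda}_{v,\phi}(x)-\lambda_v(\gamma x)\leq\frac{\log C_v}{d-1}.$$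
   Context: The standard local height is $\lambda_v(x)=\log\max\{1,|x|_v\}$ for $x\in\mathbb{C}_v$. For a polynomial $f$ with coefficients in $\mathbb{C}_v$ of degree $d\geq 2$, the local canonical height is $\hat{\lambda}_{v,f}(x)=\lim_{n\to\infty}d^{-n}\lambda_v(f^n(x))$ (this limit exists), where $f^n$ is the $n$-th iterate of $f$. *)

(* Defs.v *)
From mathcomp Require Import all_boot all_order all_algebra.
From mathcomp Require Import all_classical all_reals all_analysis.
Set Implicit Arguments. Unset Strict Implicit. Unset Printing Implicit Defensive.
Import Order.TTheory GRing.Theory Num.Theory numFieldNormedType.Exports.
Local Open Scope ring_scope.

Definition is_absval (F : fieldType) (R : realType) (abs : F -> R) : Prop :=
  [/\ forall x, 0 <= abs x,
      forall x, abs x = 0 <-> x = 0,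
      forall x y, abs (x * y) = abs x * abs y
    & forall x y, abs (x + y) <= abs x + abs y].

Definition nonarchimedean (F : fieldType) (R : realType) (abs : F -> R) : Prop :=
  forall x y, abs (x + y) <= Num.max (abs x) (abs y).

Definition abs_complete (F : fieldType) (R : realType) (abs : F -> R) : Prop :=
  forall u : nat -> F,
    (forall e : R, 0 < e -> exists N, forall m n, (N <= m)%N -> (N <= n)%N ->
        abs (u m - u n) < e) ->
    exists l, forall e : R, 0 < e -> exists N, forall n, (N <= n)%N -> abs (u n - l) < e.

Definition algebraic_over (K F : fieldType) (iota : {rmorphism K -> F}) (y : F) : Prop :=
  exists p : {poly K}, p != 0 /\ root (map_poly iota p) y.

Definition alg_dense (K F : fieldType) (R : realType) (iota : {rmorphism K -> F})
    (abs : F -> R) : Prop :=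
  forall x (e : R), 0 < e -> exists y, algebraic_over iota y /\ abs (x - y) < e.

Definition loc_height (F : fieldType) (R : realType) (abs : F -> R) (x : F) : R :=
  ln (Num.max 1 (abs x)).

Definition can_height (F : fieldType) (R : realType) (abs : F -> R)
    (f : {poly F}) (x : F) : R :=
  limn ((fun n : nat => ((size f).-1%:R ^- n) * loc_height abs (iter n (fun y => f.[y]) x)) : R^nat).

(* Main.v *)
Require Import Defs.
From mathcomp Require Import all_boot all_order all_algebra.
From mathcomp Require Import all_classical all_reals all_analysis.
From mathcomp Require Import ring lra.
Import Order.TTheory GRing.Theory Num.Theory numFieldNormedType.Exports.
Local Open Scope ring_scope.

Set Implicit Arguments. Unset Strict Implicit.
Section AbsLemmas.
Variables (F : fieldType) (R : realType) (abs : F -> R) (habs : is_absval abs).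

Lemma abs_ge0 x : 0 <= abs x. Proof. by case: habs. Qed.
Lemma abs_mul x y : abs (x * y) = abs x * abs y. Proof. by case: habs. Qed.
Lemma abs_tri x y : abs (x + y) <= abs x + abs y. Proof. by case: habs. Qed.
Lemma abs_eq0 x : abs x = 0 <-> x = 0. Proof. by case: habs. Qed.

Lemma abs1 : abs 1 = 1.
Proof.
have h := abs_mul 1 1; rewrite mulr1 in h.
have n0 : abs 1 != 0 by apply/eqP => /abs_eq0 /eqP; rewrite oner_eq0.
by apply: (mulfI n0); rewrite -h mulr1.
Qed.

Lemma absN x : abs (- x) = abs x.
Proof.
have h : abs (-1) * abs (-1) = 1 by rewrite -abs_mul mulrNN mulr1 abs1.
have h0 := abs_ge0 (-1).
have e : abs (-1) = 1 by nra.
by rewrite -mulN1r abs_mul e mul1r.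
Qed.

Lemma abs_exp x n : abs (x ^+ n) = abs x ^+ n.
Proof. elim: n => [|n IH]; by rewrite ?expr0 ?abs1 // !exprS abs_mul IH. Qed.

Lemma abs_prod (I : Type) (r : seq I) (G : I -> F) :
  abs (\prod_(i <- r) G i) = \prod_(i <- r) abs (G i).
Proof.
elim: r => [|a r IH]; first by rewrite !big_nil abs1.
by rewrite !big_cons abs_mul IH.
Qed.

Lemma abs_subge x y : abs x - abs y <= abs (x - y).
Proof.
have := abs_tri (x - y) y; rewrite subrK; lra.
Qed.

Lemma abs_sub_na (hna : nonarchimedean abs) x y : abs y < abs x -> abs x <= abs (x - y).
Proof.
move=> lt; have := hna (x - y) y; rewrite subrK => h.
case: (leP (abs (x - y)) (abs y)) => h2.
  by move: h; rewrite (max_r h2) => h3; move: lt; rewrite ltNge h3.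
by move: h; rewrite (max_l (ltW h2)).
Qed.

Lemma lh_ge0 x : 0 <= loc_height abs x.
Proof. by rewrite /loc_height ln_ge0 // le_max lexx. Qed.

Lemma lh_mul a b : loc_height abs (a * b) <= loc_height abs a + loc_height abs b.
Proof.
have mp : forall t : R, 0 < Num.max 1 t by move=> t; rewrite lt_max ltr01.
rewrite /loc_height -lnM ?posrE ?mp //.
rewrite ler_ln ?posrE ?mp ?mulr_gt0 //.
rewrite ge_max abs_mul; apply/andP; split.
  by rewrite mulr_ege1 // le_max lexx.
by rewrite ler_pM ?abs_ge0 ?le_max ?lexx ?orbT.
Qed.

End AbsLemmas.

Lemma bigmax_ge (R : realType) (I : eqType) (r : seq I) (G : I -> R) x0 j :
  j \in r -> G j <= \big[Num.max/x0]_(i <- r) G i.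
Proof.
elim: r => [//|a r IH]; rewrite in_cons => /orP[/eqP->|h]; rewrite big_cons le_max ?lexx //.
by rewrite IH ?orbT.
Qed.

Lemma bigmax_ge0 (R : realType) (I : Type) (r : seq I) (G : I -> R) x0 :
  x0 <= \big[Num.max/x0]_(i <- r) G i.
Proof.
elim: r => [|a r IH]; rewrite ?big_nil // big_cons le_max IH orbT //.
Qed.

Ltac fs h0 h1 := field; rewrite ?h1 ?expf_neq0 ?(gt_eqF h0) ?andbT //.

Lemma key (R : realType) (D : R) (hD : 1 < D) (lam s : nat -> R) (lo hi K : R)
 (step : forall n, - lo <= lam n.+1 - D * lam n <= hi)
 (hK : forall n, `|s n - lam n| <= K) :
 lam 0 - lo/(D-1) <= limn ((fun n => D ^- n * s n) : R^nat) <= lam 0 + hi/(D-1).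
Proof.
have D0 : 0 < D by lra.
have D1 : D - 1 != 0 by rewrite subr_eq0 gt_eqF.
have D1p : 0 < D - 1 by lra.
have xpos : forall n, 0 < D ^- n by move=> n; rewrite invr_gt0 exprn_gt0.
have xS : forall n, D ^- n = D * D ^- n.+1.
  move=> n; rewrite exprS; field; rewrite ?expf_neq0 ?gt_eqF //.
pose v := (fun n => D ^- n * lam n - lo * D ^- n / (D - 1)) : R^nat.
pose w := (fun n => D ^- n * lam n + hi * D ^- n / (D - 1)) : R^nat.
have vS : forall n, v n.+1 - v n = D ^- n.+1 * (lam n.+1 - D * lam n + lo).
  move=> n; rewrite /v (xS n); fs D0 D1.
have wS : forall n, w n - w n.+1 = D ^- n.+1 * (hi - (lam n.+1 - D * lam n)).
  move=> n; rewrite /w xS; fs D0 D1.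
have vnd : {homo v : n m / (n <= m)%N >-> n <= m}.
  apply/nondecreasing_seqP => n; rewrite -subr_ge0 vS mulr_ge0 ?(ltW (xpos _)) //.
  have /andP[] := step n; lra.
have wni : {homo w : n m / (n <= m)%N >-> m <= n}.
  apply/nonincreasing_seqP => n; rewrite -subr_ge0 wS mulr_ge0 ?(ltW (xpos _)) //.
  have /andP[] := step n; lra.
have lohi : 0 <= lo + hi by have /andP[] := step 0%N; lra.
have vw : forall n, v n <= w n.
  move=> n; rewrite /v /w -subr_ge0.
  have -> : D ^- n * lam n + hi * D ^- n / (D - 1) - (D ^- n * lam n - lo * D ^- n / (D - 1))
     = (lo + hi) * D ^- n / (D - 1) by fs D0 D1.
  apply: mulr_ge0; [apply: mulr_ge0 => //; exact: ltW | by rewrite invr_ge0 ltW].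
have vub : forall n, v n <= w 0%N.
  move=> n; apply: le_trans (vw n) _; exact: wni.
have cv : cvgn v.
  apply: nondecreasing_is_cvgn => //; exists (w 0%N) => _ [n _ <-]; exact: vub.
have e0 : ((fun n => D ^- n * s n - v n) @ \oo --> (0:R))%classic.
  set M := K + `|lo / (D - 1)|.
  have eM : ((fun n => M * D^-1 ^+ n) @ \oo --> (0:R))%classic.
    rewrite -(mulr0 M); apply: cvgMl_tmp; apply: cvg_expr; rewrite gtr0_norm ?invr_gt0 ?D0 // invf_lt1; lra.
  apply: (@squeeze_cvgr _ _ _ _ (fun n => - (M * D^-1 ^+ n)) (fun n => M * D^-1 ^+ n)).
  - apply: nearW => n; rewrite exprVn -ler_norml.
    have -> : D ^- n * s n - v n = D ^- n * (s n - lam n) + lo * D ^- n / (D - 1).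
      by rewrite /v; field; rewrite ?D1 ?expf_neq0 ?(gt_eqF D0) ?andbT.
    apply: le_trans (ler_normD _ _) _.
    rewrite normrM (gtr0_norm (xpos n)) /M mulrDl.
    apply: lerD; first by rewrite mulrC ler_wpM2r ?(ltW (xpos n)) ?hK.
    have -> : lo * D ^- n / (D - 1) = lo / (D - 1) * D ^- n by rewrite mulrAC.
    by rewrite normrM (gtr0_norm (xpos n)).
  - have h := cvgN eM; rewrite oppr0 in h; exact: h.
  - exact: eM.
have -> : limn ((fun n => D ^- n * s n) : R^nat) = limn v.
  have E : ((fun n => D ^- n * s n) : R^nat) = (v + (fun n => D ^- n * s n - v n)).
    by apply/funext => n /=; rewrite addrC subrK.
  rewrite E; apply: cvg_lim => //.
  have h := cvgD cv e0; rewrite addr0 in h; exact: h.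
apply/andP; split.
  have := nondecreasing_cvgn_le vnd cv 0%N; rewrite /v expr0 invr1 !mul1r.
  by rewrite mulr1.
apply: limr_le => //; apply: nearW => n.
apply: le_trans (vub n) _; rewrite /w expr0 invr1 !mul1r.
by rewrite mulr1.
Qed.

Lemma main_bound (K F : fieldType) (R : realType) (iota : {rmorphism K -> F}) (abs : F -> R)
  (habs : is_absval abs) (phi : {poly K}) (d : nat) (hd : (2 <= d)%N) (hsize : size phi = d.+1)
  (gamma : F) (hgamma : gamma != 0) (c C : R) (hc : 1 <= c) (hC : 1 <= C)
  (up : forall y, Num.max 1 (abs (gamma *: (map_poly iota phi \Po (gamma^-1 *: 'X))).[y])
          <= C * Num.max 1 (abs y) ^+ d)
  (low : forall y, Num.max 1 (abs y) ^+ d <=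
          c ^+ d * Num.max 1 (abs (gamma *: (map_poly iota phi \Po (gamma^-1 *: 'X))).[y]))
  (x : F) :
  - (d%:R * ln c) / (d%:R - 1) <= can_height abs (map_poly iota phi) x - loc_height abs (gamma * x)
    <= ln C / (d%:R - 1).
Proof.
set fphi := map_poly iota phi.
set psi := gamma *: (fphi \Po (gamma^-1 *: 'X)).
have hP1 : forall y, psi.[y] = gamma * fphi.[gamma^-1 * y].
  by move=> y; rewrite hornerZ horner_comp hornerZ hornerX.
have hit : forall n, iter n (fun y => psi.[y]) (gamma * x) = gamma * iter n (fun y => fphi.[y]) x.
  by elim=> [//|n IH] /=; rewrite IH hP1 mulKf.
have sz : (size fphi).-1 = d by rewrite size_map_poly hsize.
have mp : forall t : R, 0 < Num.max 1 t by move=> t; rewrite lt_max ltr01.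
have c0 : 0 < c by lra.
have C0 : 0 < C by lra.
have stepy : forall y, - (d%:R * ln c) <= loc_height abs psi.[y] - d%:R * loc_height abs y <= ln C.
  move=> y; set m := Num.max 1 (abs y); set P := Num.max 1 (abs psi.[y]).
  have hl : m ^+ d <= c ^+ d * P := low y.
  have hu : P <= C * m ^+ d := up y.
  have lm : ln (m ^+ d) = d%:R * ln m by rewrite lnXn ?mp // mulr_natl.
  have lc : ln (c ^+ d) = d%:R * ln c by rewrite lnXn // mulr_natl.
  have L1 : ln (m ^+ d) <= ln (c ^+ d) + ln P.
    by rewrite -lnM ?posrE ?exprn_gt0 ?mp // ler_ln ?posrE ?mulr_gt0 ?exprn_gt0 ?mp.
  have L2 : ln P <= ln C + ln (m ^+ d).
    by rewrite -lnM ?posrE ?exprn_gt0 ?mp // ler_ln ?posrE ?mulr_gt0 ?exprn_gt0 ?mp.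
  rewrite /loc_height -/m -/P; apply/andP; split; lra.
have hD : (1 : R) < d%:R by rewrite ltr1n.
have hK : forall n, `|loc_height abs (iter n (fun y => fphi.[y]) x) -
     loc_height abs (iter n (fun y => psi.[y]) (gamma*x))| <=
     loc_height abs gamma + loc_height abs gamma^-1.
  move=> n /=; rewrite hit.
  set z := iter n _ x.
  have h1 := @lh_mul _ _ _ habs gamma z.
  have h2 := @lh_mul _ _ _ habs gamma^-1 (gamma * z); rewrite mulKf // in h2.
  have h3 := @lh_ge0 _ _ abs gamma; have h4 := @lh_ge0 _ _ abs gamma^-1.
  rewrite ler_norml; apply/andP; split; lra.
have := @key R d%:R hD (fun n => loc_height abs (iter n (fun y => psi.[y]) (gamma*x)))
  (fun n => loc_height abs (iter n (fun y => fphi.[y]) x)) (d%:R * ln c) (ln C)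
  _ (fun n => stepy _) hK.
rewrite /can_height sz /=.
move=> /andP[h1 h2]; apply/andP; split; rewrite ?mulNr; lra.
Qed.

Lemma abs0 (F : fieldType) (R : realType) (abs : F -> R) (habs : is_absval abs) : abs 0 = 0.
Proof. by case: habs => _ h _ _; apply/h. Qed.

Lemma lower_core (F : fieldType) (R : realType) (abs : F -> R) (habs : is_absval abs)
  (psi : {poly F}) (rs : seq F) (d : nat) (bd : F)
  (hpr : forall y, psi.[y] = bd * \prod_(r <- rs) (y - r)) (hs : size rs = d)
  (c : R) (hc : 1 <= c) (y : F) (E : R) :
  (abs y <= c) \/ (c < abs y /\ 0 <= E /\ (forall r, r \in rs -> E <= abs (y - r))
     /\ abs y ^+ d <= c ^+ d * (abs bd * E ^+ d)) ->
  Num.max 1 (abs y) ^+ d <= c ^+ d * Num.max 1 (abs psi.[y]).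
Proof.
have mp : forall t : R, 1 <= Num.max 1 t by move=> t; rewrite le_max lexx.
have c0 : 0 <= c by lra.
case=> [h|[h [E0 [hE hy]]]].
  apply: le_trans (ler_peMr _ (mp _)); last by rewrite exprn_ge0.
  by apply: lerXn2r; rewrite ?nnegrE ?ge_max ?h ?hc // (le_trans ler01 (mp _)).
have -> : Num.max 1 (abs y) = abs y by apply/max_idPr; lra.
apply: le_trans hy _; rewrite ler_pM2l ?exprn_gt0 //; last by lra.
apply: (le_trans _ (_ : abs psi.[y] <= _)); last by rewrite le_max lexx orbT.
rewrite hpr (abs_mul habs) (abs_prod habs) ler_wpM2l ?(abs_ge0 habs) //.
rewrite -hs; elim: rs hE {hpr hs} => [|a r IH] hE; first by rewrite big_nil expr0.
rewrite big_cons exprS ler_pM ?exprn_ge0 ?hE ?mem_head //.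
by apply: IH => r0 hr0; apply: hE; rewrite in_cons hr0 orbT.
Qed.

Lemma upper_na (F : fieldType) (R : realType) (abs : F -> R) (habs : is_absval abs)
  (hna : nonarchimedean abs) (psi : {poly F}) (d : nat) (hs : size psi = d.+1)
  (C : R) (hC : 1 <= C) (hb : forall i : 'I_d.+1, abs psi`_i <= C) (y : F) :
  Num.max 1 (abs psi.[y]) <= C * Num.max 1 (abs y) ^+ d.
Proof.
set m := Num.max 1 (abs y).
have m1 : 1 <= m by rewrite le_max lexx.
have Cm : 1 <= C * m ^+ d by rewrite mulr_ege1 // exprn_ege1.
rewrite ge_max Cm /= horner_coef hs.
elim/big_rec: _ => [|i s _ IH]; first by rewrite (abs0 habs); lra.
apply: le_trans (hna _ _) _; rewrite ge_max IH andbT (abs_mul habs) (abs_exp habs).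
apply: ler_pM; rewrite ?(abs_ge0 habs) ?exprn_ge0 ?(abs_ge0 habs) ?hb //.
apply: (@le_trans _ _ (m ^+ i)).
  by apply: lerXn2r; rewrite ?nnegrE ?(abs_ge0 habs) ?le_max ?lexx ?orbT //; lra.
by apply: ler_weXn2l => //; rewrite -ltnS ltn_ord.
Qed.

Lemma upper_a (F : fieldType) (R : realType) (abs : F -> R) (habs : is_absval abs)
  (psi : {poly F}) (d : nat) (hs : size psi = d.+1) (y : F) :
  Num.max 1 (abs psi.[y]) <=
  Num.max 1 (\sum_(i < d.+1) abs psi`_i) * Num.max 1 (abs y) ^+ d.
Proof.
set m := Num.max 1 (abs y).
have m1 : 1 <= m by rewrite le_max lexx.
have S1 : 1 <= Num.max 1 (\sum_(i < d.+1) abs psi`_i) by rewrite le_max lexx.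
have h : abs psi.[y] <= (\sum_(i < d.+1) abs psi`_i) * m ^+ d.
  rewrite horner_coef hs.
  elim/big_rec2: _ => [|i s1 s2 _ IH]; first by rewrite (abs0 habs) mul0r.
  apply: le_trans (abs_tri habs _ _) _; rewrite mulrDl lerD //.
  rewrite (abs_mul habs) (abs_exp habs) ler_wpM2l ?(abs_ge0 habs) //.
  apply: (@le_trans _ _ (m ^+ i)).
    by apply: lerXn2r; rewrite ?nnegrE ?(abs_ge0 habs) ?le_max ?lexx ?orbT //; lra.
  by apply: ler_weXn2l => //; rewrite -ltnS ltn_ord.
rewrite ge_max mulr_ege1 ?exprn_ege1 //=.
apply: le_trans h _; rewrite ler_wpM2r ?le_max ?lexx ?orbT //.
by rewrite exprn_ge0 //; lra.
Qed.

Unset Implicit Arguments.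

Theorem corollary2p6
  (K : fieldType) (F : closedFieldType) (R : realType)
  (iota : {rmorphism K -> F}) (abs : F -> R)
  (habs : is_absval abs) (hcomp : abs_complete abs) (hdense : alg_dense iota abs)
  (phi : {poly K}) (d : nat) (hd : (2 <= d)%N) (hsize : size phi = d.+1)
  (gamma : F) (hgamma : gamma != 0)
  (rs : seq F)
  (hfact : gamma *: (map_poly iota phi \Po (gamma^-1 *: 'X)) =
           lead_coef (gamma *: (map_poly iota phi \Po (gamma^-1 *: 'X))) *:
             \prod_(r <- rs) ('X - r%:P)) :
  let psi := gamma *: (map_poly iota phi \Po (gamma^-1 *: 'X)) in
  let A := \big[Num.max/0]_(r <- rs) abs r in
  let B := powR (abs (lead_coef psi)) (- (d%:R)^-1) in
  let diff := fun x => can_height abs (map_poly iota phi) x - loc_height abs (gamma * x) in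
  (nonarchimedean abs ->
     let c := Num.max 1 (Num.max A B) in
     let C := \big[Num.max/1]_(i < d.+1) abs psi`_i in
     forall x : F, - (d%:R * ln c) / (d%:R - 1) <= diff x <= ln C / (d%:R - 1)) /\
  (~ nonarchimedean abs ->
     let c := Num.max 1 (A + B) in
     let C := Num.max 1 (\sum_(i < d.+1) abs psi`_i) in
     forall x : F, - (d%:R * ln c) / (d%:R - 1) <= diff x <= ln C / (d%:R - 1)).
Proof.
move=> psi A B diff.
have hgi : gamma^-1 != 0 by rewrite invr_eq0.
have szpsi : size psi = d.+1.
  by rewrite /psi size_scale // size_comp_poly2 ?size_map_poly // size_scale // size_polyX.
have hf : psi = lead_coef psi *: \prod_(r <- rs) ('X - r%:P) := hfact.
have bd0 : lead_coef psi != 0 by rewrite lead_coef_eq0 -size_poly_eq0 szpsi.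
have hs : size rs = d.
  have : size psi = size (lead_coef psi *: \prod_(r <- rs) ('X - r%:P)) by rewrite -hf.
  by rewrite (size_scale _ bd0) size_prod_XsubC szpsi => -[].
have hpr : forall y, psi.[y] = lead_coef psi * \prod_(r <- rs) (y - r).
  move=> y; rewrite {1}hf hornerZ horner_prod; congr (_ * _).
  by apply: eq_bigr => r _; rewrite hornerXsubC.
have absbd : 0 < abs (lead_coef psi).
  rewrite lt_neqAle (abs_ge0 habs) andbT eq_sym; apply/eqP => /(abs_eq0 habs) /eqP.
  by rewrite (negbTE bd0).
have B0 : 0 < B by rewrite /B powR_gt0.
have d0 : (d%:R : R) != 0 by rewrite pnatr_eq0 -lt0n (leq_trans _ hd).
have BB : abs (lead_coef psi) * B ^+ d = 1.
  rewrite /B -powR_mulrn ?ltW // -powRrM mulNr mulVf // powR_inv1 ?ltW //.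
  by rewrite mulfV // gt_eqF.
have Ars : forall r, r \in rs -> abs r <= A by move=> r hr; apply: bigmax_ge.
have A0 : 0 <= A by apply: bigmax_ge0.
split.
- move=> hna c C x; rewrite /diff.
  apply: main_bound => //.
  + by rewrite le_max lexx.
  + by apply: bigmax_ge0.
  + move=> y; apply: upper_na => //; first by apply: bigmax_ge0.
    by move=> i; apply: bigmax_ge; exact: mem_index_enum.
  + move=> y; apply: (@lower_core _ _ _ habs _ _ _ _ hpr hs c _ y (abs y)); first by rewrite le_max lexx.
    case: (leP (abs y) c) => h; [by left | right].
    have Bc : B <= c by rewrite !le_max lexx !orbT.
    have Ac : A <= c by rewrite !le_max lexx !orbT.
    split => //; split; first exact: abs_ge0.
    split.
      move=> r hr; apply: (abs_sub_na hna).
      by apply: le_lt_trans (Ars r hr) _; apply: le_lt_trans Ac h.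
    rewrite mulrA; apply: ler_peMl; first by rewrite exprn_ge0 // (abs_ge0 habs).
    rewrite -BB [X in X <= _]mulrC ler_wpM2r ?(ltW absbd) //.
    by apply: lerXn2r; rewrite ?nnegrE ?(ltW B0) //; lra.
- move=> hna c C x; rewrite /diff.
  apply: main_bound => //.
  + by rewrite le_max lexx.
  + by rewrite le_max lexx.
  + by move=> y; apply: upper_a.
  + move=> y; apply: (@lower_core _ _ _ habs _ _ _ _ hpr hs c _ y (abs y - A)); first by rewrite le_max lexx.
    case: (leP (abs y) c) => h; [by left | right].
    have ABc : A + B <= c by rewrite le_max lexx orbT.
    have yA : A < abs y by lra.
    split => //; split; first by lra.
    split.
      move=> r hr; apply: le_trans (abs_subge habs y r); have := Ars r hr; lra.
    rewrite mulrA (mulrC (c ^+ d)) -mulrA -exprMn.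
    have key2 : B * abs y <= c * (abs y - A).
      have c1 : 0 <= c by lra.
      have e1 : 0 <= (abs y - c) * (c - B) by apply: mulr_ge0; lra.
      have e2 : 0 <= c * (c - B - A) by apply: mulr_ge0; lra.
      nra.
    rewrite -[X in X <= _]mul1r -BB -mulrA ler_wpM2l ?(ltW absbd) // -exprMn.
    apply: lerXn2r; rewrite ?nnegrE //.
    by apply: mulr_ge0; [exact: ltW | exact: abs_ge0].
    by apply: le_trans key2; apply: mulr_ge0; [exact: ltW | exact: abs_ge0].
Qed.
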